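(* Let $\omega$ be a rectilinearly-convex obstacle, and let $S$ be a finite set of closed line segments inside $\omega$ such that (1) $S$ intersects each of the four extreme edges of $\omega$ and (2) $\bigcup_{s\in S}s$ is connected. Then $S$ is a skeleton for $\omega$.
   Context: An obstacle $\omega$ is a simple polygon in $\mathbb{R}^2$ (a closed, bounded polygonal region without holes whose boundary does not intersect itself), assumed in general position (no three of its vertices are collinear); edges of $\omega$ are those of its boundary. $\omega$ is rectilinear if each edge is horizontal or vertical, and a rectilinear obstacle is rectilinearly-convex if any two points of $\omega$ can be joined by a shortest rectilinear path (made of horizontal and vertical segments, of minimum $\ell_1$ length) contained in $\omega$. A corner point of a rectilinear path is a point where a horizontal and a vertical segment of the path meet. A set $S$ of closed line segments is inside $\omega$ if the union of its elements is contained in $\omega$. Such an $S$ is a skeleton for $\omega$ if for every pair of points $p,q$ not in the interior of $\omega$ such that every shortest rectilinear path between $p$ and $q$ with at most one corner point meets the interior of $\omega$, each such path intersects some element of $S$. The bounding box $B(\omega)$ is the smallest closed axis-parallel rectangle containing $\omega$; the extreme edges of $\omega$ are the edges of $\omega$ lying on the boundary of $B(\omega)$ (a rectilinearly-convex obstacle has exactly four: left, right, bottom, top). *)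

(* Defs.v *)
From Stdlib Require Import Reals List Lra.
Open Scope R_scope.

Definition pt := (R * R)%type.
Definition pset := pt -> Prop.

Definition seg (a b : pt) : pset := fun p =>
  exists t, 0 <= t <= 1 /\
    p = (fst a + t * (fst b - fst a), snd a + t * (snd b - snd a)).

Definition dist2 (p q : pt) : R := (fst p - fst q)^2 + (snd p - snd q)^2.
Definition interior (A : pset) : pset := fun p =>
  exists r, 0 < r /\ forall q, dist2 p q < r * r -> A q.
Definition closure (A : pset) : pset := fun p =>
  forall r, 0 < r -> exists q, A q /\ dist2 p q < r * r.
Definition boundary (A : pset) : pset := fun p => closure A p /\ ~ interior A p.
Definition is_open (A : pset) : Prop := forall p, A p -> interior A p.
Definition is_closed (A : pset) : Prop := forall p, closure A p -> A p.
Definition bounded (A : pset) : Prop :=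
  exists M, forall p, A p -> Rabs (fst p) <= M /\ Rabs (snd p) <= M.
Definition connected (A : pset) : Prop :=
  forall U V : pset, is_open U -> is_open V ->
    (forall p, A p -> U p \/ V p) ->
    (exists p, A p /\ U p) -> (exists p, A p /\ V p) ->
    exists p, A p /\ U p /\ V p.

(** Polygons given by their cyclic list of vertices V = [v_0; ...; v_{n-1}] *)
Definition vtx (V : list pt) (i : nat) : pt := nth (i mod length V) V (0, 0).
Definition edge (V : list pt) (i : nat) : pset := seg (vtx V i) (vtx V (S i)).
Definition poly_curve (V : list pt) : pset := fun p =>
  exists i, (i < length V)%nat /\ edge V i p.

Definition simple_polygon (V : list pt) : Prop :=
  (3 <= length V)%nat /\
  forall i j, (i < length V)%nat -> (j < length V)%nat -> i <> j ->
    ((S i) mod length V = j -> forall p, edge V i p -> edge V j p -> p = vtx V j) /\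
    ((S j) mod length V = i -> forall p, edge V i p -> edge V j p -> p = vtx V i) /\
    ((S i) mod length V <> j -> (S j) mod length V <> i ->
       forall p, ~ (edge V i p /\ edge V j p)).

Definition collinear (a b c : pt) : Prop :=
  (fst b - fst a) * (snd c - snd a) - (snd b - snd a) * (fst c - fst a) = 0.

Definition general_position (V : list pt) : Prop :=
  forall i j k, (i < length V)%nat -> (j < length V)%nat -> (k < length V)%nat ->
    i <> j -> j <> k -> i <> k -> ~ collinear (vtx V i) (vtx V j) (vtx V k).

Definition obstacle (V : list pt) (w : pset) : Prop :=
  simple_polygon V /\ general_position V /\
  is_closed w /\ bounded w /\ (exists p, interior w p) /\
  (forall p, boundary w p <-> poly_curve V p).

Definition rectilinear (V : list pt) : Prop :=
  forall i, (i < length V)%nat ->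
    fst (vtx V i) = fst (vtx V (S i)) \/ snd (vtx V i) = snd (vtx V (S i)).

(** Rectilinear paths: a start point a followed by the list l of the next
    vertices; consecutive vertices are joined by horizontal/vertical segments. *)
Fixpoint rpath (a : pt) (l : list pt) : Prop :=
  match l with
  | nil => True
  | q :: l' => (fst a = fst q \/ snd a = snd q) /\ rpath q l'
  end.
Definition l1 (p q : pt) : R := Rabs (fst p - fst q) + Rabs (snd p - snd q).
Fixpoint plen (a : pt) (l : list pt) : R :=
  match l with nil => 0 | q :: l' => l1 a q + plen q l' end.
Fixpoint psegs (a : pt) (l : list pt) : list (pt * pt) :=
  match l with nil => nil | q :: l' => (a, q) :: psegs q l' end.
Fixpoint ptrace (a : pt) (l : list pt) : pset :=
  match l with
  | nil => fun x => x = a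
  | q :: l' => fun x => seg a q x \/ ptrace q l' x
  end.

Definition shortest_rpath (a b : pt) (l : list pt) : Prop :=
  rpath a l /\ last l a = b /\
  forall l', rpath a l' -> last l' a = b -> plen a l <= plen a l'.

Definition corner (a : pt) (l : list pt) : pset := fun x =>
  exists u v u' v', In (u, v) (psegs a l) /\ In (u', v') (psegs a l) /\
    u <> v /\ snd u = snd v /\ u' <> v' /\ fst u' = fst v' /\
    seg u v x /\ seg u' v' x.
Definition at_most_one_corner (a : pt) (l : list pt) : Prop :=
  forall x y, corner a l x -> corner a l y -> x = y.

Definition rect_convex (w : pset) : Prop :=
  forall p q, w p -> w q ->
    exists l, shortest_rpath p q l /\ forall x, ptrace p l x -> w x.

Definition segset (s : pt * pt) : pset := seg (fst s) (snd s).
Definition inside (S : list (pt * pt)) (w : pset) : Prop :=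
  forall s x, In s S -> segset s x -> w x.
Definition union_segs (S : list (pt * pt)) : pset := fun x =>
  exists s, In s S /\ segset s x.

Definition skeleton (w : pset) (S : list (pt * pt)) : Prop :=
  inside S w /\
  forall p q, ~ interior w p -> ~ interior w q ->
    (forall l, shortest_rpath p q l -> at_most_one_corner p l ->
       exists x, ptrace p l x /\ interior w x) ->
    forall l, shortest_rpath p q l -> at_most_one_corner p l ->
      exists s, In s S /\ exists x, ptrace p l x /\ segset s x.

Definition in_rect (xl xr yb yt : R) : pset := fun p =>
  xl <= fst p <= xr /\ yb <= snd p <= yt.
Definition is_bbox (w : pset) (xl xr yb yt : R) : Prop :=
  (forall p, w p -> in_rect xl xr yb yt p) /\
  forall xl' xr' yb' yt', (forall p, w p -> in_rect xl' xr' yb' yt' p) ->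
    forall p, in_rect xl xr yb yt p -> in_rect xl' xr' yb' yt' p.
Definition rect_boundary (xl xr yb yt : R) : pset := fun p =>
  in_rect xl xr yb yt p /\
  (fst p = xl \/ fst p = xr \/ snd p = yb \/ snd p = yt).

Definition extreme_edge (V : list pt) (w : pset) (i : nat) : Prop :=
  (i < length V)%nat /\
  exists xl xr yb yt, is_bbox w xl xr yb yt /\
    forall p, edge V i p -> rect_boundary xl xr yb yt p.

(* Main.v *)
From Stdlib Require Import Reals List Lra Lia Psatz Classical.
Require Import Defs.
Open Scope R_scope.


Ltac rabs := repeat match goal with
 | H: context [Rabs ?x] |- _ => let h := fresh "hh" in destruct (Rcase_abs x) as [h|h];
     [rewrite (Rabs_left x h) in * | rewrite (Rabs_right x h) in *]
 | |- context [Rabs ?x] => let h := fresh "hh" in destruct (Rcase_abs x) as [h|h];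
     [rewrite (Rabs_left x h) in * | rewrite (Rabs_right x h) in *]
 end.

Definition btw (u v x : R) := (u <= x <= v) \/ (v <= x <= u).

Lemma pair_eq (z : pt) : z = (fst z, snd z).
Proof. destruct z; reflexivity. Qed.

Lemma seg_l a b : seg a b a.
Proof. exists 0. split; [lra|]. destruct a; simpl; f_equal; ring. Qed.

Lemma seg_r a b : seg a b b.
Proof. exists 1. split; [lra|]. destruct b; simpl; f_equal; ring. Qed.

Lemma seg_sym a b z : seg a b z -> seg b a z.
Proof.
  intros [t [Ht E]]. exists (1 - t). split; [lra|]. rewrite E.
  f_equal; ring.
Qed.

Lemma seg_aa a z : seg a a z -> z = a.
Proof. intros [t [Ht E]]. rewrite E. destruct a; simpl; f_equal; ring. Qed.

Lemma seg_h a b z : snd a = snd b ->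
  (seg a b z <-> snd z = snd a /\ btw (fst a) (fst b) (fst z)).
Proof.
  destruct a as [a1 a2], b as [b1 b2], z as [z1 z2]; simpl. intros Hab. subst b2.
  split.
  - intros [t [Ht E]]. injection E; intros; subst. split; [lra|].
    unfold btw. destruct (Rle_dec a1 b1); [left|right]; split; nra.
  - intros [Hz Hb]. subst z2. destruct (Req_dec a1 b1).
    + subst. exists 0. split; [lra|]. unfold btw in Hb. simpl; f_equal; destruct Hb; lra.
    + exists ((z1 - a1)/(b1 - a1)).
      assert (E : (z1 - a1)/(b1 - a1) * (b1 - a1) = z1 - a1) by (field; lra).
      split.
      * unfold btw in Hb. set (t := (z1 - a1)/(b1 - a1)) in *.
        destruct (Rlt_dec a1 b1); destruct Hb; split; nra.
      * simpl; f_equal; lra.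
Qed.

Lemma seg_v a b z : fst a = fst b ->
  (seg a b z <-> fst z = fst a /\ btw (snd a) (snd b) (snd z)).
Proof.
  destruct a as [a1 a2], b as [b1 b2], z as [z1 z2]; simpl. intros Hab. subst b1.
  split.
  - intros [t [Ht E]]. injection E; intros; subst. split; [lra|].
    unfold btw. destruct (Rle_dec a2 b2); [left|right]; split; nra.
  - intros [Hz Hb]. subst z1. destruct (Req_dec a2 b2).
    + subst. exists 0. split; [lra|]. unfold btw in Hb. simpl; f_equal; destruct Hb; lra.
    + exists ((z2 - a2)/(b2 - a2)).
      assert (E : (z2 - a2)/(b2 - a2) * (b2 - a2) = z2 - a2) by (field; lra).
      split.
      * unfold btw in Hb. set (t := (z2 - a2)/(b2 - a2)) in *.
        destruct (Rlt_dec a2 b2); destruct Hb; split; nra.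
      * simpl; f_equal; lra.
Qed.

Lemma seg_snd a b z : snd a = snd b -> seg a b z -> snd z = snd a.
Proof. intros H Hs. apply (seg_h a b z H) in Hs. tauto. Qed.
Lemma seg_fst a b z : fst a = fst b -> seg a b z -> fst z = fst a.
Proof. intros H Hs. apply (seg_v a b z H) in Hs. tauto. Qed.

Lemma l1_tri a b c : l1 a c <= l1 a b + l1 b c.
Proof.
  unfold l1. pose proof (Rabs_triang (fst a - fst b) (fst b - fst c)).
  pose proof (Rabs_triang (snd a - snd b) (snd b - snd c)).
  replace (fst a - fst c) with ((fst a - fst b) + (fst b - fst c)) by ring.
  replace (snd a - snd c) with ((snd a - snd b) + (snd b - snd c)) by ring.
  lra.
Qed.

Lemma l1_ge0 a b : 0 <= l1 a b.
Proof. unfold l1. pose proof (Rabs_pos (fst a - fst b)). pose proof (Rabs_pos (snd a - snd b)). lra. Qed.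

Lemma last_indep (p : pt) l a b : last (p :: l) a = last (p :: l) b.
Proof. revert p; induction l as [|r l IH]; intros p; [reflexivity|]. apply IH. Qed.

Lemma last_cons (q : pt) l a : last (q :: l) a = last l q.
Proof. destruct l as [|p l]; [reflexivity|]. change (last (p :: l) a = last (p :: l) q). apply last_indep. Qed.

Lemma plen_ge l a : l1 a (last l a) <= plen a l.
Proof.
  revert a; induction l as [|q l IH]; intros a.
  - simpl. unfold l1. rewrite !Rminus_diag, Rabs_R0. lra.
  - rewrite last_cons. simpl plen. pose proof (IH q). pose proof (l1_tri a q (last l q)). lra.
Qed.

Definition L1s (a b : pt) : pset := fun z =>
  seg a (fst b, snd a) z \/ seg (fst b, snd a) b z.
Definition L2s (a b : pt) : pset := fun z =>
  seg a (fst a, snd b) z \/ seg (fst a, snd b) b z.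

Fixpoint firstH (a : pt) (l : list pt) : Prop :=
  match l with nil => False
  | q :: l' => (a = q /\ firstH q l') \/ (a <> q /\ snd a = snd q) end.
Fixpoint firstV (a : pt) (l : list pt) : Prop :=
  match l with nil => False
  | q :: l' => (a = q /\ firstV q l') \/ (a <> q /\ fst a = fst q) end.

Lemma first_exists l a : rpath a l -> last l a <> a -> firstH a l \/ firstV a l.
Proof.
  revert a; induction l as [|q l IH]; intros a Hr Hl.
  - simpl in Hl. congruence.
  - simpl in Hr |- *. destruct Hr as [Hd Hr]. rewrite last_cons in Hl.
    destruct (classic (a = q)) as [E|E].
    + subst q. destruct (IH a Hr Hl); tauto.
    + destruct Hd; tauto.
Qed.

Lemma firstV_seg l a : firstV a l -> exists v, In (a, v) (psegs a l) /\ a <> v /\ fst a = fst v.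
Proof.
  revert a; induction l as [|q l IH]; intros a H; simpl in *; [tauto|].
  destruct H as [[E H]|[E H]].
  - subst q. destruct (IH a H) as [v [Hi Hv]]. exists v. tauto.
  - exists q. tauto.
Qed.
Lemma firstH_seg l a : firstH a l -> exists v, In (a, v) (psegs a l) /\ a <> v /\ snd a = snd v.
Proof.
  revert a; induction l as [|q l IH]; intros a H; simpl in *; [tauto|].
  destruct H as [[E H]|[E H]].
  - subst q. destruct (IH a H) as [v [Hi Hv]]. exists v. tauto.
  - exists q. tauto.
Qed.

Lemma pair_neq_snd (a q : pt) : a <> q -> fst a = fst q -> snd a <> snd q.
Proof. intros H1 H2 H3. apply H1. rewrite (pair_eq a), (pair_eq q). congruence. Qed.
Lemma pair_neq_fst (a q : pt) : a <> q -> snd a = snd q -> fst a <> fst q.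
Proof. intros H1 H2 H3. apply H1. rewrite (pair_eq a), (pair_eq q). congruence. Qed.

Lemma mono_split a q l : plen a (q :: l) = l1 a (last (q :: l) a) ->
  plen q l = l1 q (last l q) /\ l1 a q + l1 q (last l q) = l1 a (last l q).
Proof.
  rewrite last_cons. simpl plen. intros H. pose proof (plen_ge l q).
  pose proof (l1_tri a q (last l q)). split; lra.
Qed.

Lemma firstV_neq l q : firstV q l -> plen q l = l1 q (last l q) -> snd q <> snd (last l q).
Proof.
  revert q; induction l as [|r l IH]; intros q H Hp; simpl in H; [tauto|].
  destruct H as [[E H]|[E H]].
  - subst r. apply mono_split in Hp. rewrite last_cons. apply IH; tauto.
  - apply mono_split in Hp. destruct Hp as [_ Hp]. rewrite last_cons.
    pose proof (pair_neq_snd q r E H). unfold l1 in Hp.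
    set (b := last l r) in *. intros Heq. rabs; lra.
Qed.

Lemma firstH_neq l q : firstH q l -> plen q l = l1 q (last l q) -> fst q <> fst (last l q).
Proof.
  revert q; induction l as [|r l IH]; intros q H Hp; simpl in H; [tauto|].
  destruct H as [[E H]|[E H]].
  - subst r. apply mono_split in Hp. rewrite last_cons. apply IH; tauto.
  - apply mono_split in Hp. destruct Hp as [_ Hp]. rewrite last_cons.
    pose proof (pair_neq_fst q r E H). unfold l1 in Hp.
    set (b := last l r) in *. intros Heq. rabs; lra.
Qed.

Lemma corner_cons a q l x : corner q l x -> corner a (q :: l) x.
Proof.
  intros (u & v & u' & v' & H1 & H2 & R). exists u, v, u', v'.
  simpl. tauto.
Qed.

Lemma amoc_cons a q l : at_most_one_corner a (q :: l) -> at_most_one_corner q l.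
Proof. intros H x y Hx Hy. apply H; apply corner_cons; assumption. Qed.

Lemma btw_split u v q x : btw u v q -> btw u v x -> btw u q x \/ btw q v x.
Proof.
  unfold btw. intros H1 H2. destruct (Rle_dec x q);
  destruct H1; destruct H2;
  first [left; left; lra | left; right; lra | right; left; lra | right; right; lra].
Qed.

Lemma mkpair_eq (x y : R) (q : pt) : x = fst q -> y = snd q -> (x, y) = q.
Proof. intros; subst; destruct q; reflexivity. Qed.

Lemma corner_atH a q l : a <> q -> snd a = snd q -> firstV q l -> corner a (q :: l) q.
Proof.
  intros E H F. destruct (firstV_seg l q F) as [v [Hi [Hv Hf]]].
  exists a, q, q, v. simpl. split; [left; reflexivity|]. split; [right; exact Hi|].
  repeat split; auto. apply seg_r. apply seg_l.
Qed.

Lemma corner_atV a q l : a <> q -> fst a = fst q -> firstH q l -> corner a (q :: l) q.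
Proof.
  intros E H F. destruct (firstH_seg l q F) as [v [Hi [Hv Hf]]].
  exists q, v, a, q. simpl. split; [right; exact Hi|]. split; [left; reflexivity|].
  repeat split; auto. apply seg_l. apply seg_r.
Qed.

Lemma btw_of_l1 a q b : snd a = snd q -> l1 a q + l1 q b = l1 a b -> btw (fst a) (fst b) (fst q).
Proof.
  intros H E. unfold l1 in E. rewrite H in E. unfold btw.
  destruct (Rle_dec (fst a) (fst b)); [left|right]; rabs; split; lra.
Qed.
Lemma btw_of_l1v a q b : fst a = fst q -> l1 a q + l1 q b = l1 a b -> btw (snd a) (snd b) (snd q).
Proof.
  intros H E. unfold l1 in E. rewrite H in E. unfold btw.
  destruct (Rle_dec (snd a) (snd b)); [left|right]; rabs; split; lra.
Qed.

Lemma path_main l : forall a, rpath a l -> plen a l = l1 a (last l a) -> at_most_one_corner a l ->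
 (firstH a l -> (forall z, L1s a (last l a) z -> ptrace a l z) /\
     (snd a <> snd (last l a) -> corner a l (fst (last l a), snd a)))
 /\ (firstV a l -> (forall z, L2s a (last l a) z -> ptrace a l z) /\
     (fst a <> fst (last l a) -> corner a l (fst a, snd (last l a)))).
Proof.
  induction l as [|q l IH]; intros a Hr Hp Ha.
  - simpl. tauto.
  - pose proof (mono_split a q l Hp) as [Hp' Heq].
    pose proof (amoc_cons _ _ _ Ha) as Ha'.
    simpl in Hr. destruct Hr as [Hd Hr].
    specialize (IH q Hr Hp' Ha').
    rewrite last_cons. set (b := last l q) in *.
    change (ptrace a (q :: l)) with (fun x => seg a q x \/ ptrace q l x).
    split.
    + intros HF. simpl in HF. destruct HF as [[E HF]|[Ne E]].
      * subst q. destruct IH as [IH _]. destruct (IH HF) as [I1 I2]. split.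
        -- intros z Hz. right. apply I1. exact Hz.
        -- intros Hn. apply corner_cons. apply I2; auto.
      * destruct (classic (b = q)) as [Eb|Eb].
        -- split.
           ++ intros z Hz. left. unfold L1s in Hz. rewrite Eb in Hz.
              rewrite (mkpair_eq (fst q) (snd a) q) in Hz by auto.
              destruct Hz as [Hz|Hz]; [exact Hz|]. apply seg_aa in Hz. subst z. apply seg_r.
           ++ intros Hn. exfalso. apply Hn. rewrite Eb. auto.
        -- destruct (first_exists l q Hr Eb) as [F|F].
           ++ destruct IH as [IH _]. destruct (IH F) as [I1 I2]. unfold L1s, L2s in I1.
              assert (Ec : (fst b, snd q) = (fst b, snd a)) by (rewrite E; reflexivity).
              rewrite Ec in I1, I2. split.
              ** intros z Hz. unfold L1s in Hz. destruct Hz as [Hz|Hz].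
                 --- pose proof (btw_of_l1 a q b E Heq) as Bq.
                     assert (Hs : snd a = snd (fst b, snd a)) by reflexivity.
                     apply (seg_h _ _ _ Hs) in Hz. destruct Hz as [Hz1 Hz2].
                     destruct (btw_split _ _ _ _ Bq Hz2) as [B|B].
                     +++ left. apply (seg_h _ _ _ E). split; auto.
                     +++ right. apply I1. left. apply seg_h. simpl; auto.
                         simpl. split; [congruence|exact B].
                 --- right. apply I1. right. exact Hz.
              ** intros Hn. apply corner_cons. apply I2. congruence.
           ++ destruct IH as [_ IH]. destruct (IH F) as [I1 I2]. unfold L1s, L2s in I1.
              destruct (Req_dec (fst q) (fst b)) as [Ex|Ex].
              ** assert (Ec : (fst b, snd a) = q) by (apply mkpair_eq; auto).
                 assert (Eb2 : (fst q, snd b) = b) by (apply mkpair_eq; auto).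
                 rewrite Eb2 in I1. split.
                 --- intros z Hz. unfold L1s in Hz. rewrite Ec in Hz.
                     destruct Hz as [Hz|Hz]; [left; exact Hz|]. right. apply I1. left. exact Hz.
                 --- intros Hn. rewrite Ec. apply corner_atH; auto.
              ** exfalso. pose proof (I2 Ex) as C2. apply (corner_cons a) in C2.
                 pose proof (corner_atH a q l Ne E F) as C1.
                 pose proof (Ha _ _ C1 C2) as E2.
                 apply (firstV_neq l q F Hp'). rewrite E2 at 1. reflexivity.
    + intros HF. simpl in HF. destruct HF as [[E HF]|[Ne E]].
      * subst q. destruct IH as [_ IH]. destruct (IH HF) as [I1 I2]. split.
        -- intros z Hz. right. apply I1. exact Hz.
        -- intros Hn. apply corner_cons. apply I2; auto.
      * destruct (classic (b = q)) as [Eb|Eb].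
        -- split.
           ++ intros z Hz. left. unfold L2s in Hz. rewrite Eb in Hz.
              rewrite (mkpair_eq (fst a) (snd q) q) in Hz by auto.
              destruct Hz as [Hz|Hz]; [exact Hz|]. apply seg_aa in Hz. subst z. apply seg_r.
           ++ intros Hn. exfalso. apply Hn. rewrite Eb. auto.
        -- destruct (first_exists l q Hr Eb) as [F|F].
           ++ destruct IH as [IH _]. destruct (IH F) as [I1 I2]. unfold L1s, L2s in I1.
              destruct (Req_dec (snd q) (snd b)) as [Ex|Ex].
              ** assert (Ec : (fst a, snd b) = q) by (apply mkpair_eq; auto).
                 assert (Eb2 : (fst b, snd q) = b) by (apply mkpair_eq; auto).
                 rewrite Eb2 in I1. split.
                 --- intros z Hz. unfold L2s in Hz. rewrite Ec in Hz.
                     destruct Hz as [Hz|Hz]; [left; exact Hz|]. right. apply I1. left. exact Hz.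
                 --- intros Hn. rewrite Ec. apply corner_atV; auto.
              ** exfalso. pose proof (I2 Ex) as C2. apply (corner_cons a) in C2.
                 pose proof (corner_atV a q l Ne E F) as C1.
                 pose proof (Ha _ _ C1 C2) as E2.
                 apply (firstH_neq l q F Hp'). rewrite E2 at 1. reflexivity.
           ++ destruct IH as [_ IH]. destruct (IH F) as [I1 I2]. unfold L1s, L2s in I1.
              assert (Ec : (fst q, snd b) = (fst a, snd b)) by (rewrite E; reflexivity).
              rewrite Ec in I1, I2. split.
              ** intros z Hz. unfold L2s in Hz. destruct Hz as [Hz|Hz].
                 --- pose proof (btw_of_l1v a q b E Heq) as Bq.
                     assert (Hs : fst a = fst (fst a, snd b)) by reflexivity.
                     apply (seg_v _ _ _ Hs) in Hz. destruct Hz as [Hz1 Hz2].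
                     destruct (btw_split _ _ _ _ Bq Hz2) as [B|B].
                     +++ left. apply (seg_v _ _ _ E). split; auto.
                     +++ right. apply I1. left. apply seg_v. simpl; auto.
                         simpl. split; [congruence|exact B].
                 --- right. apply I1. right. exact Hz.
              ** intros Hn. apply corner_cons. apply I2. congruence.
Qed.

Lemma plen_two p b : plen p ((fst b, snd p) :: b :: nil) = l1 p b.
Proof. simpl. unfold l1. simpl. rewrite !Rminus_diag, !Rabs_R0. ring. Qed.
Lemma plen_two' p b : plen p ((fst p, snd b) :: b :: nil) = l1 p b.
Proof. simpl. unfold l1. simpl. rewrite !Rminus_diag, !Rabs_R0. ring. Qed.

Lemma shortest_len p b l : shortest_rpath p b l -> plen p l = l1 p b.
Proof.
  intros [Hr [Hl Hm]]. pose proof (plen_ge l p). rewrite Hl in H.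
  assert (plen p l <= plen p ((fst b, snd p) :: b :: nil)).
  { apply Hm. simpl. repeat split; auto. reflexivity. }
  rewrite plen_two in H0. lra.
Qed.

Lemma path_cover p b l : shortest_rpath p b l -> at_most_one_corner p l -> p <> b ->
  (forall z, L1s p b z -> ptrace p l z) \/ (forall z, L2s p b z -> ptrace p l z).
Proof.
  intros Hs Ha Hne. pose proof (shortest_len p b l Hs) as Hp.
  destruct Hs as [Hr [Hl _]]. rewrite <- Hl in Hp.
  pose proof (path_main l p Hr Hp Ha) as [P1 P2].
  rewrite Hl in P1, P2.
  destruct (first_exists l p Hr) as [F|F]; [congruence| |].
  - left. apply (P1 F).
  - right. apply (P2 F).
Qed.

Lemma shortest_two p b : shortest_rpath p b ((fst b, snd p) :: b :: nil) /\
   at_most_one_corner p ((fst b, snd p) :: b :: nil).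
Proof.
  split.
  - split; [simpl; repeat split; auto|]. split; [reflexivity|].
    intros l' Hr Hl. rewrite plen_two. pose proof (plen_ge l' p). rewrite Hl in H. exact H.
  - assert (K : forall x, corner p ((fst b, snd p) :: b :: nil) x -> x = (fst b, snd p)).
    { intros x (u & v & u' & v' & H1 & H2 & N1 & E1 & N2 & E2 & S1 & S2).
      simpl in H1, H2.
      destruct H1 as [H1|[H1|[]]]; destruct H2 as [H2|[H2|[]]];
        injection H1; injection H2; intros; subst.
      all: first [ exfalso; apply N1; first [apply mkpair_eq | symmetry; apply mkpair_eq]; simpl in *; congruence
                 | exfalso; apply N2; first [apply mkpair_eq | symmetry; apply mkpair_eq]; simpl in *; congruence
                 | (apply seg_snd in S1; [|assumption]; apply seg_fst in S2; [|assumption];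
                    rewrite (pair_eq x); simpl in *; congruence) ]. }
    intros x y Hx Hy. rewrite (K x Hx), (K y Hy). reflexivity.
Qed.

Lemma shortest_two' p b : shortest_rpath p b ((fst p, snd b) :: b :: nil) /\
   at_most_one_corner p ((fst p, snd b) :: b :: nil).
Proof.
  split.
  - split; [simpl; repeat split; auto|]. split; [reflexivity|].
    intros l' Hr Hl. rewrite plen_two'. pose proof (plen_ge l' p). rewrite Hl in H. exact H.
  - assert (K : forall x, corner p ((fst p, snd b) :: b :: nil) x -> x = (fst p, snd b)).
    { intros x (u & v & u' & v' & H1 & H2 & N1 & E1 & N2 & E2 & S1 & S2).
      simpl in H1, H2.
      destruct H1 as [H1|[H1|[]]]; destruct H2 as [H2|[H2|[]]];
        injection H1; injection H2; intros; subst.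
      all: first [ exfalso; apply N1; first [apply mkpair_eq | symmetry; apply mkpair_eq]; simpl in *; congruence
                 | exfalso; apply N2; first [apply mkpair_eq | symmetry; apply mkpair_eq]; simpl in *; congruence
                 | (apply seg_snd in S1; [|assumption]; apply seg_fst in S2; [|assumption];
                    rewrite (pair_eq x); simpl in *; congruence) ]. }
    intros x y Hx Hy. rewrite (K x Hx), (K y Hy). reflexivity.
Qed.

Lemma trace_two p b z : ptrace p ((fst b, snd p) :: b :: nil) z -> L1s p b z.
Proof.
  simpl. unfold L1s. intros [H|[H|H]]; auto. subst. right. apply seg_r.
Qed.
Lemma trace_two' p b z : ptrace p ((fst p, snd b) :: b :: nil) z -> L2s p b z.
Proof.
  simpl. unfold L2s. intros [H|[H|H]]; auto. subst. right. apply seg_r.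
Qed.

Lemma all_h l a : plen a l = l1 a (last l a) -> snd a = snd (last l a) ->
  forall u v, In (u, v) (psegs a l) -> snd u = snd v.
Proof.
  revert a; induction l as [|q l IH]; intros a Hp Hs u v Hi; [simpl in Hi; tauto|].
  pose proof (mono_split a q l Hp) as [Hp' Heq]. rewrite last_cons in Hs.
  unfold l1 in Heq. set (b := last l q) in *.
  assert (snd a = snd q) by (rabs; lra).
  simpl in Hi. destruct Hi as [Hi|Hi].
  - injection Hi; intros; subst; auto.
  - apply (IH q Hp'); auto. unfold b in *. congruence.
Qed.

Lemma all_v l a : plen a l = l1 a (last l a) -> fst a = fst (last l a) ->
  forall u v, In (u, v) (psegs a l) -> fst u = fst v.
Proof.
  revert a; induction l as [|q l IH]; intros a Hp Hs u v Hi; [simpl in Hi; tauto|].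
  pose proof (mono_split a q l Hp) as [Hp' Heq]. rewrite last_cons in Hs.
  unfold l1 in Heq. set (b := last l q) in *.
  assert (fst a = fst q) by (rabs; lra).
  simpl in Hi. destruct Hi as [Hi|Hi].
  - injection Hi; intros; subst; auto.
  - apply (IH q Hp'); auto. unfold b in *. congruence.
Qed.

Definition HHp (w : pset) := forall a b, w a -> w b -> snd a = snd b -> forall z, seg a b z -> w z.
Definition HVp (w : pset) := forall a b, w a -> w b -> fst a = fst b -> forall z, seg a b z -> w z.

Lemma rc_HH w : rect_convex w -> HHp w.
Proof.
  intros Hc a b Ha Hb Hs z Hz. destruct (Hc a b Ha Hb) as [l [Hsh Hin]].
  destruct (classic (a = b)) as [E|E].
  - subst. apply seg_aa in Hz. subst. auto.
  - apply Hin. pose proof (shortest_len a b l Hsh) as Hp.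
    pose proof Hsh as [Hr [Hl _]].
    assert (Ham : at_most_one_corner a l).
    { intros x y (u & v & u' & v' & H1 & H2 & N1 & E1 & N2 & E2 & _) _. exfalso.
      rewrite <- Hl in Hp. assert (snd a = snd (last l a)) by congruence.
      pose proof (all_h l a Hp H u' v' H2). apply N2. rewrite (pair_eq u'), (pair_eq v'). congruence. }
    destruct (path_cover a b l Hsh Ham E) as [C|C]; apply C.
    + left. rewrite (mkpair_eq (fst b) (snd a) b); auto.
    + right. rewrite (mkpair_eq (fst a) (snd b) a); auto.
Qed.

Lemma rc_HV w : rect_convex w -> HVp w.
Proof.
  intros Hc a b Ha Hb Hs z Hz. destruct (Hc a b Ha Hb) as [l [Hsh Hin]].
  destruct (classic (a = b)) as [E|E].
  - subst. apply seg_aa in Hz. subst. auto.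
  - apply Hin. pose proof (shortest_len a b l Hsh) as Hp.
    pose proof Hsh as [Hr [Hl _]].
    assert (Ham : at_most_one_corner a l).
    { intros x y (u & v & u' & v' & H1 & H2 & N1 & E1 & N2 & E2 & _) _. exfalso.
      rewrite <- Hl in Hp. assert (fst a = fst (last l a)) by congruence.
      pose proof (all_v l a Hp H u v H1). apply N1. rewrite (pair_eq u), (pair_eq v). congruence. }
    destruct (path_cover a b l Hsh Ham E) as [C|C]; apply C.
    + right. rewrite (mkpair_eq (fst b) (snd a) a); auto.
    + left. rewrite (mkpair_eq (fst a) (snd b) b); auto.
Qed.


Lemma dist_bound a b r : 0 < r -> dist2 a b < r * r ->
  Rabs (fst a - fst b) < r /\ Rabs (snd a - snd b) < r.
Proof.
  unfold dist2. intros Hr H.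
  assert (H1 : (fst a - fst b)^2 < r * r) by (pose proof (pow2_ge_0 (snd a - snd b)); lra).
  assert (H2 : (snd a - snd b)^2 < r * r) by (pose proof (pow2_ge_0 (fst a - fst b)); lra).
  split; apply Rabs_def1; nra.
Qed.

Lemma dist_small a b r : 0 < r -> Rabs (fst a - fst b) < r / 2 -> Rabs (snd a - snd b) < r / 2 ->
  dist2 a b < r * r.
Proof.
  unfold dist2. intros Hr H1 H2. apply Rabs_def2 in H1. apply Rabs_def2 in H2.
  destruct H1, H2. nra.
Qed.

Lemma dist2_tri2 a b c : dist2 a c <= 2 * (dist2 a b + dist2 b c).
Proof.
  unfold dist2.
  pose proof (pow2_ge_0 ((fst a - fst b) - (fst b - fst c))).
  pose proof (pow2_ge_0 ((snd a - snd b) - (snd b - snd c))).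
  replace (fst a - fst c) with ((fst a - fst b) + (fst b - fst c)) by ring.
  replace (snd a - snd c) with ((snd a - snd b) + (snd b - snd c)) by ring.
  nra.
Qed.

Lemma dist2_refl a : dist2 a a = 0.
Proof. unfold dist2. rewrite !Rminus_diag. ring. Qed.

Lemma in_cl (A : pset) z : A z -> closure A z.
Proof. intros H r Hr. exists z. split; auto. rewrite dist2_refl. nra. Qed.

Lemma cl_mono (A B : pset) z : (forall y, A y -> B y) -> closure A z -> closure B z.
Proof. intros H C r Hr. destruct (C r Hr) as [y [Hy Hd]]. exists y; auto. Qed.

Lemma not_cl (A : pset) z : ~ closure A z -> exists r, 0 < r /\ forall y, A y -> ~ dist2 z y < r * r.
Proof.
  intros H. apply NNPP. intros H2. apply H. intros r Hr. apply NNPP. intros H3.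
  apply H2. exists r. split; auto. intros y Hy Hd. apply H3. exists y; auto.
Qed.

Lemma cl_union3 (A B C : pset) z : closure (fun y => A y \/ B y \/ C y) z ->
  closure A z \/ closure B z \/ closure C z.
Proof.
  intros H. apply NNPP. intros N.
  assert (NA : ~ closure A z) by tauto. assert (NB : ~ closure B z) by tauto.
  assert (NC : ~ closure C z) by tauto.
  apply not_cl in NA as [ra [Ha NA]]. apply not_cl in NB as [rb [Hb NB]].
  apply not_cl in NC as [rc [Hc NC]].
  set (r := Rmin ra (Rmin rb rc)).
  assert (0 < r) by (unfold r; repeat apply Rmin_glb_lt; auto).
  destruct (H r H0) as [y [Hy Hd]].
  assert (r <= ra) by (unfold r; apply Rmin_l).
  assert (r <= rb) by (unfold r; eapply Rle_trans; [apply Rmin_r|apply Rmin_l]).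
  assert (r <= rc) by (unfold r; eapply Rle_trans; [apply Rmin_r|apply Rmin_r]).
  destruct Hy as [Hy|[Hy|Hy]]; [apply (NA y Hy)|apply (NB y Hy)|apply (NC y Hy)]; nra.
Qed.

Lemma open_ncl (A : pset) : is_open (fun z => ~ closure A z).
Proof.
  intros z Hz. apply not_cl in Hz as [r [Hr Hz]]. exists (r / 2). split; [lra|].
  intros z' Hd C. destruct (C (r / 2) ltac:(lra)) as [y [Hy Hd2]].
  apply (Hz y Hy). pose proof (dist2_tri2 z z' y). nra.
Qed.

Lemma cl_restrict (A B : pset) z : closure A z ->
  (exists r0, 0 < r0 /\ forall y, A y -> dist2 z y < r0 * r0 -> B y) -> closure B z.
Proof.
  intros C [r0 [H0 HB]] r Hr. set (m := Rmin r r0).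
  assert (0 < m) by (apply Rmin_glb_lt; auto).
  destruct (C m H) as [y [Hy Hd]]. exists y. split.
  - apply HB; auto. assert (m <= r0) by apply Rmin_r. nra.
  - assert (m <= r) by apply Rmin_l. nra.
Qed.

Lemma open_disj (B : pset) z : (exists r, 0 < r /\ forall y, dist2 z y < r * r -> ~ B y) ->
  ~ closure B z.
Proof. intros [r [Hr H]] C. destruct (C r Hr) as [y [Hy Hd]]. apply (H y Hd Hy). Qed.

Lemma cl_snd_eq (A : pset) z c : closure A z -> (forall y, A y -> snd y = c) -> snd z = c.
Proof.
  intros C H. apply NNPP. intros N.
  assert (0 < Rabs (snd z - c)) by (apply Rabs_pos_lt; lra).
  destruct (C _ H0) as [y [Hy Hd]]. apply dist_bound in Hd; auto. rewrite (H y Hy) in Hd.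
  lra.
Qed.
Lemma cl_fst_le (A : pset) z c : closure A z -> (forall y, A y -> fst y <= c) -> fst z <= c.
Proof.
  intros C H. apply NNPP. intros N.
  assert (0 < fst z - c) by lra.
  destruct (C _ H0) as [y [Hy Hd]]. apply dist_bound in Hd; auto. pose proof (H y Hy).
  destruct Hd as [Hd _]. apply Rabs_def2 in Hd. lra.
Qed.
Lemma cl_fst_ge (A : pset) z c : closure A z -> (forall y, A y -> c <= fst y) -> c <= fst z.
Proof.
  intros C H. apply NNPP. intros N.
  assert (0 < c - fst z) by lra.
  destruct (C _ H0) as [y [Hy Hd]]. apply dist_bound in Hd; auto. pose proof (H y Hy).
  destruct Hd as [Hd _]. apply Rabs_def2 in Hd. lra.
Qed.
Lemma cl_nonempty (A : pset) z : closure A z -> exists y, A y.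
Proof. intros C. destruct (C 1 ltac:(lra)) as [y [Hy _]]. eauto. Qed.


Lemma rect_int (w : pset) (xa xb ya yb px py : R) :
  (forall x y : R, xa <= x <= xb -> ya <= y <= yb -> w (x, y)) ->
  xa < px < xb -> ya < py < yb -> interior w (px, py).
Proof.
  intros H Hx Hy. set (r := Rmin (Rmin (px - xa) (xb - px)) (Rmin (py - ya) (yb - py))).
  assert (0 < r) by (unfold r; repeat apply Rmin_glb_lt; lra).
  exists r. split; auto. intros q Hd. apply dist_bound in Hd; auto. simpl in Hd.
  destruct Hd as [H1 H2]. apply Rabs_def2 in H1. apply Rabs_def2 in H2.
  assert (r <= px - xa /\ r <= xb - px /\ r <= py - ya /\ r <= yb - py).
  { unfold r. repeat split.
    - eapply Rle_trans; [apply Rmin_l|apply Rmin_l].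
    - eapply Rle_trans; [apply Rmin_l|apply Rmin_r].
    - eapply Rle_trans; [apply Rmin_r|apply Rmin_l].
    - eapply Rle_trans; [apply Rmin_r|apply Rmin_r]. }
  rewrite (surjective_pairing q). apply H; lra.
Qed.


Lemma strip_h w u v x : HHp w -> w u -> w v -> snd u = snd v -> fst u <= x <= fst v -> w (x, snd u).
Proof.
  intros H Hu Hv E Hx. apply (H u v Hu Hv E). apply seg_h; auto. simpl. split; auto. left; lra.
Qed.
Lemma strip_v w u v y : HVp w -> w u -> w v -> fst u = fst v -> snd u <= y <= snd v -> w (fst u, y).
Proof.
  intros H Hu Hv E Hx. apply (H u v Hu Hv E). apply seg_v; auto. simpl. split; auto. left; lra.
Qed.

Lemma int_ball w c : interior w c -> exists r, 0 < r /\
  forall x y, Rabs (x - fst c) < r -> Rabs (y - snd c) < r -> w (x, y).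
Proof.
  intros [R [HR H]]. exists (R / 2). split; [lra|]. intros x y Hx Hy. apply H.
  apply dist_small; auto; simpl; rewrite Rabs_minus_sym; auto.
Qed.

Lemma dich_left w (px py x1 : R) z1 z2 : HHp w -> HVp w -> interior w (x1, py) -> px < x1 ->
  ~ interior w (px, py) ->
  closure (fun y => w y /\ snd y > py) z1 -> fst z1 < px -> snd z1 = py ->
  closure (fun y => w y /\ snd y < py) z2 -> fst z2 < px -> snd z2 = py -> False.
Proof.
  intros HH HV Hi Hx Hn C1 F1 E1 C2 F2 E2.
  destruct (int_ball w _ Hi) as [r [Hr Hb]]. simpl in Hb.
  set (d0 := Rmin r (Rmin (px - fst z1) (px - fst z2))).
  assert (Hd0 : 0 < d0) by (unfold d0; repeat apply Rmin_glb_lt; lra).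
  assert (d0 <= r /\ d0 <= px - fst z1 /\ d0 <= px - fst z2).
  { unfold d0. repeat split; [apply Rmin_l| |].
    - eapply Rle_trans; [apply Rmin_r|apply Rmin_l].
    - eapply Rle_trans; [apply Rmin_r|apply Rmin_r]. }
  destruct (C1 d0 Hd0) as [u [[Hu Huy] Hdu]]. apply dist_bound in Hdu; auto.
  destruct (C2 d0 Hd0) as [d [[Hd Hdy] Hdd]]. apply dist_bound in Hdd; auto.
  destruct Hdu as [Hu1 Hu2]. destruct Hdd as [Hd1 Hd2].
  apply Rabs_def2 in Hu1. apply Rabs_def2 in Hu2. apply Rabs_def2 in Hd1. apply Rabs_def2 in Hd2.
  assert (W1 : w (x1, snd u)) by (apply Hb; [rewrite Rminus_diag, Rabs_R0; lra| apply Rabs_def1; lra]).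
  assert (W2 : w (x1, snd d)) by (apply Hb; [rewrite Rminus_diag, Rabs_R0; lra| apply Rabs_def1; lra]).
  apply Hn. apply (rect_int w (Rmax (fst u) (fst d)) x1 (snd d) (snd u)).
  - intros x y Hxx Hy.
    assert (A1 : w (x, snd u)).
    { apply (strip_h w u (x1, snd u)); auto. simpl.
      pose proof (Rmax_l (fst u) (fst d)). lra. }
    assert (A2 : w (x, snd d)).
    { apply (strip_h w d (x1, snd d)); auto. simpl.
      pose proof (Rmax_r (fst u) (fst d)). lra. }
    apply (strip_v w (x, snd d) (x, snd u) y HV A2 A1); simpl; auto.
  - split; [apply Rmax_lub_lt; lra|lra].
  - lra.
Qed.

Lemma dich_right w (qx qy x2 : R) z1 z2 : HHp w -> HVp w -> interior w (x2, qy) -> x2 < qx ->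
  ~ interior w (qx, qy) ->
  closure (fun y => w y /\ snd y > qy) z1 -> qx < fst z1 -> snd z1 = qy ->
  closure (fun y => w y /\ snd y < qy) z2 -> qx < fst z2 -> snd z2 = qy -> False.
Proof.
  intros HH HV Hi Hx Hn C1 F1 E1 C2 F2 E2.
  destruct (int_ball w _ Hi) as [r [Hr Hb]]. simpl in Hb.
  set (d0 := Rmin r (Rmin (fst z1 - qx) (fst z2 - qx))).
  assert (Hd0 : 0 < d0) by (unfold d0; repeat apply Rmin_glb_lt; lra).
  assert (d0 <= r /\ d0 <= fst z1 - qx /\ d0 <= fst z2 - qx).
  { unfold d0. repeat split; [apply Rmin_l| |].
    - eapply Rle_trans; [apply Rmin_r|apply Rmin_l].
    - eapply Rle_trans; [apply Rmin_r|apply Rmin_r]. }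
  destruct (C1 d0 Hd0) as [u [[Hu Huy] Hdu]]. apply dist_bound in Hdu; auto.
  destruct (C2 d0 Hd0) as [d [[Hd Hdy] Hdd]]. apply dist_bound in Hdd; auto.
  destruct Hdu as [Hu1 Hu2]. destruct Hdd as [Hd1 Hd2].
  apply Rabs_def2 in Hu1. apply Rabs_def2 in Hu2. apply Rabs_def2 in Hd1. apply Rabs_def2 in Hd2.
  assert (W1 : w (x2, snd u)) by (apply Hb; [rewrite Rminus_diag, Rabs_R0; lra| apply Rabs_def1; lra]).
  assert (W2 : w (x2, snd d)) by (apply Hb; [rewrite Rminus_diag, Rabs_R0; lra| apply Rabs_def1; lra]).
  apply Hn. apply (rect_int w x2 (Rmin (fst u) (fst d)) (snd d) (snd u)).
  - intros x y Hxx Hy.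
    assert (A1 : w (x, snd u)).
    { replace (snd u) with (snd (x2, snd u)) by reflexivity.
      apply (strip_h w (x2, snd u) u); auto; simpl.
      pose proof (Rmin_l (fst u) (fst d)). lra. }
    assert (A2 : w (x, snd d)).
    { replace (snd d) with (snd (x2, snd d)) by reflexivity.
      apply (strip_h w (x2, snd d) d); auto; simpl.
      pose proof (Rmin_r (fst u) (fst d)). lra. }
    apply (strip_v w (x, snd d) (x, snd u) y HV A2 A1); simpl; auto.
  - split; [lra|apply Rmin_glb_lt; lra].
  - lra.
Qed.

Definition U0 (px py qx qy : R) (z : pt) := snd z > qy \/ (snd z > py /\ fst z < qx).
Definition V0 (px py qx qy : R) (z : pt) := snd z < py \/ (snd z < qy /\ fst z > qx).
Definition Lft (px py : R) (z : pt) := snd z = py /\ fst z < px.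
Definition Rgt (qx qy : R) (z : pt) := snd z = qy /\ fst z > qx.
Definition L1c (px py qx qy : R) (z : pt) :=
  (snd z = py /\ px <= fst z <= qx) \/ (fst z = qx /\ py <= snd z <= qy).

Lemma U0_open px py qx qy z : U0 px py qx qy z ->
  exists r, 0 < r /\ forall y, dist2 z y < r * r -> U0 px py qx qy y.
Proof.
  unfold U0. intros [H|[H1 H2]].
  - exists (snd z - qy). split; [lra|]. intros y Hd. apply dist_bound in Hd; [|lra].
    destruct Hd as [_ Hd]. apply Rabs_def2 in Hd. left; lra.
  - exists (Rmin (snd z - py) (qx - fst z)). split; [apply Rmin_glb_lt; lra|].
    intros y Hd. apply dist_bound in Hd; [|apply Rmin_glb_lt; lra].
    pose proof (Rmin_l (snd z - py) (qx - fst z)). pose proof (Rmin_r (snd z - py) (qx - fst z)).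
    destruct Hd as [Ha Hb]. apply Rabs_def2 in Ha. apply Rabs_def2 in Hb. right; lra.
Qed.

Lemma V0_open px py qx qy z : V0 px py qx qy z ->
  exists r, 0 < r /\ forall y, dist2 z y < r * r -> V0 px py qx qy y.
Proof.
  unfold V0. intros [H|[H1 H2]].
  - exists (py - snd z). split; [lra|]. intros y Hd. apply dist_bound in Hd; [|lra].
    destruct Hd as [_ Hd]. apply Rabs_def2 in Hd. left; lra.
  - exists (Rmin (qy - snd z) (fst z - qx)). split; [apply Rmin_glb_lt; lra|].
    intros y Hd. apply dist_bound in Hd; [|apply Rmin_glb_lt; lra].
    pose proof (Rmin_l (qy - snd z) (fst z - qx)). pose proof (Rmin_r (qy - snd z) (fst z - qx)).
    destruct Hd as [Ha Hb]. apply Rabs_def2 in Ha. apply Rabs_def2 in Hb. right; lra.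
Qed.

Lemma UV_disj px py qx qy z : py <= qy -> U0 px py qx qy z -> V0 px py qx qy z -> False.
Proof. unfold U0, V0. intros H [A|[A B]] [C|[C D]]; lra. Qed.

Lemma ncl_V_of_U (w : pset) px py qx qy z : py <= qy -> U0 px py qx qy z ->
  ~ closure (fun y => w y /\ V0 px py qx qy y) z.
Proof.
  intros Hle H. apply open_disj. destruct (U0_open _ _ _ _ _ H) as [r [Hr Hu]].
  exists r. split; auto. intros y Hd [_ Hv]. apply (UV_disj px py qx qy y Hle (Hu y Hd) Hv).
Qed.
Lemma ncl_U_of_V (w : pset) px py qx qy z : py <= qy -> V0 px py qx qy z ->
  ~ closure (fun y => w y /\ U0 px py qx qy y) z.
Proof.
  intros Hle H. apply open_disj. destruct (V0_open _ _ _ _ _ H) as [r [Hr Hu]].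
  exists r. split; auto. intros y Hd [_ Hv]. apply (UV_disj px py qx qy y Hle Hv (Hu y Hd)).
Qed.

Lemma cl_Lft (P : Prop) px py z : closure (fun y => Lft px py y /\ P) z -> snd z = py /\ fst z <= px.
Proof.
  intros C. split.
  - apply (cl_snd_eq _ _ _ C). intros y [[H _] _]. auto.
  - apply (cl_fst_le _ _ _ C). intros y [[_ H] _]. lra.
Qed.
Lemma cl_Rgt (P : Prop) qx qy z : closure (fun y => Rgt qx qy y /\ P) z -> snd z = qy /\ qx <= fst z.
Proof.
  intros C. split.
  - apply (cl_snd_eq _ _ _ C). intros y [[H _] _]. auto.
  - apply (cl_fst_ge _ _ _ C). intros y [[_ H] _]. lra.
Qed.
Lemma cl_P (A : pset) (P : Prop) z : closure (fun y => A y /\ P) z -> P.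
Proof. intros C. destruct (cl_nonempty _ _ C) as [y [_ H]]. exact H. Qed.

Lemma part4 px py qx qy z : px < qx -> py <= qy -> ~ L1c px py qx qy z ->
  U0 px py qx qy z \/ V0 px py qx qy z \/ Lft px py z \/ Rgt qx qy z.
Proof.
  unfold U0, V0, Lft, Rgt, L1c. intros H1 H2 N.
  destruct (Rlt_le_dec qy (snd z)); [left; left; auto|].
  destruct (Rlt_le_dec (snd z) py); [right; left; left; auto|].
  destruct (Rlt_le_dec (fst z) qx).
  - destruct (Rlt_le_dec py (snd z)); [left; right; lra|].
    destruct (Rlt_le_dec (fst z) px); [right; right; left; lra|].
    exfalso. apply N. left. lra.
  - destruct (Req_dec (fst z) qx); [exfalso; apply N; right; lra|].
    destruct (Rlt_le_dec (snd z) qy); [right; left; right; lra|].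
    right; right; right; lra.
Qed.

Lemma coreII w (Sp : pset) p q i1 i2 sT sB :
  HHp w -> HVp w -> (forall z, Sp z -> w z) -> connected Sp ->
  Sp sT -> (forall z, w z -> snd z <= snd sT) ->
  Sp sB -> (forall z, w z -> snd sB <= snd z) ->
  fst p < fst q -> snd p <= snd q -> ~ interior w p -> ~ interior w q ->
  interior w i1 -> snd i1 = snd p -> fst p <= fst i1 <= fst q ->
  interior w i2 -> snd i2 = snd q -> fst p <= fst i2 <= fst q ->
  exists z, Sp z /\ L1c (fst p) (snd p) (fst q) (snd q) z.
Proof.
  intros HH HV HS Hc HT HTm HB HBm Hpq Hpq' Hp Hq I1 E1 B1 I2 E2 B2.
  destruct p as [px py], q as [qx qy]. simpl in *.
  assert (X1 : px < fst i1).
  { destruct (Req_dec (fst i1) px) as [E|E]; [|lra]. exfalso. apply Hp.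
    rewrite (mkpair_eq px py i1) by lra. exact I1. }
  assert (X2 : fst i2 < qx).
  { destruct (Req_dec (fst i2) qx) as [E|E]; [|lra]. exfalso. apply Hq.
    rewrite (mkpair_eq qx qy i2) by lra. exact I2. }
  assert (I1' : interior w (fst i1, py)) by (rewrite <- E1, <- pair_eq; exact I1).
  assert (I2' : interior w (fst i2, qy)) by (rewrite <- E2, <- pair_eq; exact I2).
  assert (Ht : snd sT > qy).
  { destruct (int_ball w _ I2') as [r [Hr Hb]]. simpl in Hb.
    pose proof (HTm (fst i2, qy + r / 2) (Hb (fst i2) (qy + r / 2) ltac:(simpl; rewrite Rminus_diag, Rabs_R0; lra)
       ltac:(simpl; apply Rabs_def1; lra))). simpl in H. lra. }
  assert (Hb0 : snd sB < py).
  { destruct (int_ball w _ I1') as [r [Hr Hb]]. simpl in Hb.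
    pose proof (HBm (fst i1, py - r / 2) (Hb (fst i1) (py - r / 2) ltac:(simpl; rewrite Rminus_diag, Rabs_R0; lra)
       ltac:(simpl; apply Rabs_def1; lra))). simpl in H. lra. }
  apply NNPP. intros Hno.
  set (AU := fun y => w y /\ U0 px py qx qy y).
  set (AV := fun y => w y /\ V0 px py qx qy y).
  set (DL := exists z, Lft px py z /\ closure AV z).
  set (DR := exists z, Rgt qx qy z /\ closure AV z).
  set (W1 := fun z => w z /\ (U0 px py qx qy z \/ (Lft px py z /\ ~ DL) \/ (Rgt qx qy z /\ ~ DR))).
  set (W2 := fun z => w z /\ (V0 px py qx qy z \/ (Lft px py z /\ DL) \/ (Rgt qx qy z /\ DR))).
  assert (Cov : forall z, Sp z -> W1 z \/ W2 z).
  { intros z Hz. assert (Hw : w z) by auto.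
    assert (N : ~ L1c px py qx qy z) by (intros N; apply Hno; exists z; auto).
    destruct (part4 px py qx qy z Hpq Hpq' N) as [H|[H|[H|H]]].
    - left. split; auto.
    - right. split; auto.
    - destruct (classic DL); [right|left]; split; auto.
    - destruct (classic DR); [right|left]; split; auto. }
  assert (F1 : forall z, W1 z -> ~ closure W2 z).
  { intros z [Hw Hz] C.
    assert (C' : closure (fun y => AV y \/ (Lft px py y /\ DL) \/ (Rgt qx qy y /\ DR)) z).
    { apply (cl_mono W2); auto. intros y [Hy [H|[H|H]]]; [left; split|right; left|right; right]; auto. }
    apply cl_union3 in C'. destruct C' as [C1|[C1|C1]].
    - destruct Hz as [H|[[H N]|[H N]]].
      + apply (ncl_V_of_U w px py qx qy z Hpq' H C1).
      + apply N. exists z. auto.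
      + apply N. exists z. auto.
    - pose proof (cl_Lft _ _ _ _ C1) as [K1 K2]. pose proof (cl_P _ _ _ C1) as P.
      destruct Hz as [H|[[H N]|[H N]]].
      + unfold U0 in H. lra.
      + auto.
      + unfold Rgt in H. lra.
    - pose proof (cl_Rgt _ _ _ _ C1) as [K1 K2]. pose proof (cl_P _ _ _ C1) as P.
      destruct Hz as [H|[[H N]|[H N]]].
      + unfold U0 in H. lra.
      + unfold Lft in H. lra.
      + auto. }
  assert (F2 : forall z, W2 z -> ~ closure W1 z).
  { intros z [Hw Hz] C.
    assert (C' : closure (fun y => AU y \/ (Lft px py y /\ ~ DL) \/ (Rgt qx qy y /\ ~ DR)) z).
    { apply (cl_mono W1); auto. intros y [Hy [H|[H|H]]]; [left; split|right; left|right; right]; auto. }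
    apply cl_union3 in C'. destruct C' as [C1|[C1|C1]].
    - destruct Hz as [H|[[H D]|[H D]]].
      + apply (ncl_U_of_V w px py qx qy z Hpq' H C1).
      + destruct D as [z2 [Hz2 C2]]. unfold Lft in H, Hz2.
        apply (dich_left w px py (fst i1) z z2 HH HV I1' X1 Hp).
        * apply (cl_mono AU); auto. intros y [Hy Hu]. unfold U0 in Hu. split; auto; lra.
        * lra.
        * lra.
        * apply (cl_restrict AV); auto. exists (qx - fst z2). split; [lra|].
          intros y [Hy Hv] Hd. apply dist_bound in Hd; [|lra]. destruct Hd as [Hd _].
          apply Rabs_def2 in Hd. unfold V0 in Hv. split; auto. lra.
        * lra.
        * lra.
      + destruct D as [z2 [Hz2 C2]]. unfold Rgt in H, Hz2.
        apply (dich_right w qx qy (fst i2) z z2 HH HV I2' X2 Hq).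
        * apply (cl_restrict AU); auto. exists (fst z - qx). split; [lra|].
          intros y [Hy Hu] Hd. apply dist_bound in Hd; [|lra]. destruct Hd as [Hd _].
          apply Rabs_def2 in Hd. unfold U0 in Hu. split; auto. lra.
        * lra.
        * lra.
        * apply (cl_mono AV); auto. intros y [Hy Hu]. unfold V0 in Hu. split; auto; lra.
        * lra.
        * lra.
    - pose proof (cl_Lft _ _ _ _ C1) as [K1 K2]. pose proof (cl_P _ _ _ C1) as P.
      destruct Hz as [H|[[H N]|[H N]]].
      + unfold V0 in H. lra.
      + auto.
      + unfold Rgt in H. lra.
    - pose proof (cl_Rgt _ _ _ _ C1) as [K1 K2]. pose proof (cl_P _ _ _ C1) as P.
      destruct Hz as [H|[[H N]|[H N]]].
      + unfold V0 in H. lra.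
      + unfold Lft in H. lra.
      + auto. }
  destruct (Hc (fun z => ~ closure W2 z) (fun z => ~ closure W1 z) (open_ncl W2) (open_ncl W1))
    as [z [Hz [U V]]].
  - intros z Hz. destruct (Cov z Hz) as [H|H]; [left; apply F1 | right; apply F2]; auto.
  - exists sT. split; auto. apply F1. split; auto. left. unfold U0. lra.
  - exists sB. split; auto. apply F2. split; auto. left. unfold V0. lra.
  - destruct (Cov z Hz) as [H|H]; [apply V | apply U]; apply in_cl; auto.
Qed.


Definition isom (s : pt -> pt) := (forall z, s (s z) = z) /\
  (forall a b, dist2 (s a) (s b) = dist2 a b) /\
  (forall a b z, seg a b z -> seg (s a) (s b) (s z)).

Definition nx (z : pt) : pt := (- fst z, snd z).
Definition ny (z : pt) : pt := (fst z, - snd z).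
Definition tau (z : pt) : pt := (- snd z, - fst z).

Lemma isom_nx : isom nx.
Proof.
  unfold isom, nx. split; [|split].
  - intros [x y]; simpl; f_equal; ring.
  - intros [a1 a2] [b1 b2]; unfold dist2; simpl; ring.
  - intros a b z [t [Ht E]]. exists t. split; auto. rewrite E. simpl. f_equal; ring.
Qed.
Lemma isom_ny : isom ny.
Proof.
  unfold isom, ny. split; [|split].
  - intros [x y]; simpl; f_equal; ring.
  - intros [a1 a2] [b1 b2]; unfold dist2; simpl; ring.
  - intros a b z [t [Ht E]]. exists t. split; auto. rewrite E. simpl. f_equal; ring.
Qed.
Lemma isom_tau : isom tau.
Proof.
  unfold isom, tau. split; [|split].
  - intros [x y]; simpl; f_equal; ring.
  - intros [a1 a2] [b1 b2]; unfold dist2; simpl; ring.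
  - intros a b z [t [Ht E]]. exists t. split; auto. rewrite E. simpl. f_equal; ring.
Qed.

Lemma int_tr s w z : isom s -> interior w (s z) -> interior (fun x => w (s x)) z.
Proof.
  intros [I [D _]] [r [Hr H]]. exists r. split; auto. intros q Hq. apply H. rewrite D. auto.
Qed.
Lemma int_tr' s w z : isom s -> interior (fun x => w (s x)) z -> interior w (s z).
Proof.
  intros [I [D _]] [r [Hr H]]. exists r. split; auto. intros q Hq.
  rewrite <- (I q). apply H. rewrite <- D, I. auto.
Qed.
Lemma open_tr s U : isom s -> is_open U -> is_open (fun x => U (s x)).
Proof. intros Hs HU z Hz. apply int_tr; auto. Qed.

Lemma conn_tr s Sp : isom s -> connected Sp -> connected (fun x => Sp (s x)).
Proof.
  intros Hs Hc U V HU HV Hcov [a [Ha Ua]] [b [Hb Vb]].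
  pose proof Hs as [I _].
  destruct (Hc (fun x => U (s x)) (fun x => V (s x)) (open_tr s U Hs HU) (open_tr s V Hs HV))
    as [z [Hz [Uz Vz]]].
  - intros z Hz. apply Hcov. rewrite I. auto.
  - exists (s a). rewrite I. auto.
  - exists (s b). rewrite I. auto.
  - exists (s z). rewrite I. auto.
Qed.

Definition Hgen (c : pt -> R) (w : pset) :=
  forall a b, w a -> w b -> c a = c b -> forall z, seg a b z -> w z.

Lemma Hgen_tr s c c' w : isom s -> (forall a b, c a = c b -> c' (s a) = c' (s b)) ->
  Hgen c' w -> Hgen c (fun x => w (s x)).
Proof.
  intros [I [D Sg]] Hc H a b Ha Hb E z Hz. apply (H (s a) (s b)); auto.
Qed.

Lemma coreIII w (Sp : pset) p q i1 i2 sL sR :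
  HHp w -> HVp w -> (forall z, Sp z -> w z) -> connected Sp ->
  Sp sL -> (forall z, w z -> fst sL <= fst z) ->
  Sp sR -> (forall z, w z -> fst z <= fst sR) ->
  fst p <= fst q -> snd p < snd q -> ~ interior w p -> ~ interior w q ->
  interior w i1 -> fst i1 = fst q -> snd p <= snd i1 <= snd q ->
  interior w i2 -> fst i2 = fst p -> snd p <= snd i2 <= snd q ->
  exists z, Sp z /\ L1c (fst p) (snd p) (fst q) (snd q) z.
Proof.
  intros HH HV HS Hc HL HLm HR HRm Hpq Hpq' Hp Hq I1 E1 B1 I2 E2 B2.
  pose proof isom_tau as Ht. pose proof Ht as [I _].
  destruct (coreII (fun x => w (tau x)) (fun x => Sp (tau x)) (tau q) (tau p) (tau i1) (tau i2)
     (tau sL) (tau sR)) as [z [Hz Hl]].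
  - apply (Hgen_tr tau snd fst w Ht); auto. intros a b E. unfold tau; simpl. rewrite E; auto.
  - apply (Hgen_tr tau fst snd w Ht); auto. intros a b E. unfold tau; simpl. rewrite E; auto.
  - intros z Hz. auto.
  - apply conn_tr; auto.
  - rewrite I. auto.
  - intros z Hz. pose proof (HLm _ Hz). unfold tau in *; simpl in *. lra.
  - rewrite I. auto.
  - intros z Hz. pose proof (HRm _ Hz). unfold tau in *; simpl in *. lra.
  - unfold tau; simpl; lra.
  - unfold tau; simpl; lra.
  - intros N. apply Hq. rewrite <- (I q). apply (int_tr' tau w); auto.
  - intros N. apply Hp. rewrite <- (I p). apply (int_tr' tau w); auto.
  - apply int_tr; auto. rewrite I. auto.
  - unfold tau; simpl; lra.
  - unfold tau; simpl; lra.
  - apply int_tr; auto. rewrite I. auto.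
  - unfold tau; simpl; lra.
  - unfold tau; simpl; lra.
  - exists (tau z). split; auto. unfold L1c, tau in *. simpl in *. lra.
Qed.

Definition L2c (px py qx qy : R) (z : pt) :=
  (fst z = px /\ py <= snd z <= qy) \/ (snd z = qy /\ px <= fst z <= qx).

Lemma L1s_c p b z : fst p <= fst b -> snd p <= snd b ->
  (L1s p b z <-> L1c (fst p) (snd p) (fst b) (snd b) z).
Proof.
  intros H1 H2. unfold L1s, L1c.
  rewrite (seg_h p (fst b, snd p) z eq_refl), (seg_v (fst b, snd p) b z eq_refl).
  unfold btw; simpl. split; intros H; lra.
Qed.
Lemma L2s_c p b z : fst p <= fst b -> snd p <= snd b ->
  (L2s p b z <-> L2c (fst p) (snd p) (fst b) (snd b) z).
Proof.
  intros H1 H2. unfold L2s, L2c.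
  rewrite (seg_v p (fst p, snd b) z eq_refl), (seg_h (fst p, snd b) b z eq_refl).
  unfold btw; simpl. split; intros H; lra.
Qed.

Definition sides4 (w Sp : pset) :=
  (exists s, Sp s /\ forall z, w z -> fst s <= fst z) /\
  (exists s, Sp s /\ forall z, w z -> fst z <= fst s) /\
  (exists s, Sp s /\ forall z, w z -> snd s <= snd z) /\
  (exists s, Sp s /\ forall z, w z -> snd z <= snd s).

Definition PL (w Sp : pset) (p b : pt) : Prop :=
  HHp w -> HVp w -> (forall z, Sp z -> w z) -> connected Sp -> sides4 w Sp ->
  ~ interior w p -> ~ interior w b ->
  (exists z, L1s p b z /\ interior w z) -> (exists z, L2s p b z /\ interior w z) ->
  exists z, Sp z /\ L1s p b z.

Lemma coreN w Sp p b : fst p <= fst b -> snd p <= snd b -> PL w Sp p b.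
Proof.
  intros Hx Hy HH HV HS Hc [[sL [HL HLm]] [[sR [HR HRm]] [[sB [HB HBm]] [sT [HT HTm]]]]]
    Hp Hb [i1 [L1 I1]] [i2 [L2 I2]].
  apply L1s_c in L1; auto. apply L2s_c in L2; auto.
  destruct p as [px py], b as [bx by0]. simpl in *.
  assert (Goal : (exists z, Sp z /\ L1c px py bx by0 z) -> exists z, Sp z /\ L1s (px, py) (bx, by0) z).
  { intros [z [Hz Hl]]. exists z. split; auto. apply L1s_c; auto. }
  apply Goal. clear Goal.
  assert (NE : forall i, interior w i -> fst i = px -> snd i = py -> False).
  { intros i Hi E1 E2. apply Hp. rewrite (mkpair_eq px py i) by auto. auto. }
  assert (NE' : forall i, interior w i -> fst i = bx -> snd i = by0 -> False).
  { intros i Hi E1 E2. apply Hb. rewrite (mkpair_eq bx by0 i) by auto. auto. }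
  unfold L1c, L2c in L1, L2.
  destruct L1 as [B1|R1]; destruct L2 as [A2|T2].
  -
    destruct (classic (interior w (bx, py))) as [Ic|Ic].
    + assert (py < snd i2).
      { destruct (Req_dec (snd i2) py); [exfalso; apply (NE i2); tauto|lra]. }
      apply (coreIII w Sp (px, py) (bx, by0) (bx, py) i2 sL sR); simpl; auto; lra.
    + assert (px < fst i1).
      { destruct (Req_dec (fst i1) px); [exfalso; apply (NE i1); tauto|lra]. }
      destruct (coreII w Sp (px, py) (bx, py) i1 i1 sT sB) as [z [Hz Hl]]; simpl; auto; try lra.
      exists z. split; auto. unfold L1c in *. simpl in *. lra.
  -
    assert (px < fst i1).
    { destruct (Req_dec (fst i1) px); [exfalso; apply (NE i1); tauto|lra]. }
    apply (coreII w Sp (px, py) (bx, by0) i1 i2 sT sB); simpl; auto; lra.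
  -
    assert (snd i1 < by0).
    { destruct (Req_dec (snd i1) by0); [exfalso; apply (NE' i1); tauto|lra]. }
    apply (coreIII w Sp (px, py) (bx, by0) i1 i2 sL sR); simpl; auto; lra.
  -
    destruct (classic (interior w (bx, py))) as [Ic|Ic].
    + assert (fst i2 < bx).
      { destruct (Req_dec (fst i2) bx); [exfalso; apply (NE' i2); tauto|lra]. }
      apply (coreII w Sp (px, py) (bx, by0) (bx, py) i2 sT sB); simpl; auto; lra.
    + assert (snd i1 < by0).
      { destruct (Req_dec (snd i1) by0); [exfalso; apply (NE' i1); tauto|lra]. }
      destruct (coreIII w Sp (bx, py) (bx, by0) i1 i1 sL sR) as [z [Hz Hl]]; simpl; auto; try lra.
      exists z. split; auto. unfold L1c in *. simpl in *. lra.
Qed.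

Lemma L1s_tr s p b z : isom s -> (forall a c, s (fst c, snd a) = (fst (s c), snd (s a))) ->
  L1s p b z -> L1s (s p) (s b) (s z).
Proof.
  intros [I [D Sg]] Hm. unfold L1s. rewrite <- Hm. intros [H|H]; [left|right]; apply Sg; auto.
Qed.
Lemma L2s_tr s p b z : isom s -> (forall a c, s (fst a, snd c) = (fst (s a), snd (s c))) ->
  L2s p b z -> L2s (s p) (s b) (s z).
Proof.
  intros [I [D Sg]] Hm. unfold L2s. rewrite <- Hm. intros [H|H]; [left|right]; apply Sg; auto.
Qed.

Lemma sides_nx w Sp : sides4 w Sp -> sides4 (fun x => w (nx x)) (fun x => Sp (nx x)).
Proof.
  pose proof isom_nx as [I _].
  intros [[sL [HL HLm]] [[sR [HR HRm]] [[sB [HB HBm]] [sT [HT HTm]]]]].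
  split; [|split; [|split]].
  - exists (nx sR). rewrite I. split; auto. intros z Hz. pose proof (HRm _ Hz). unfold nx in *; simpl in *; lra.
  - exists (nx sL). rewrite I. split; auto. intros z Hz. pose proof (HLm _ Hz). unfold nx in *; simpl in *; lra.
  - exists (nx sB). rewrite I. split; auto. intros z Hz. pose proof (HBm _ Hz). unfold nx in *; simpl in *; lra.
  - exists (nx sT). rewrite I. split; auto. intros z Hz. pose proof (HTm _ Hz). unfold nx in *; simpl in *; lra.
Qed.
Lemma sides_ny w Sp : sides4 w Sp -> sides4 (fun x => w (ny x)) (fun x => Sp (ny x)).
Proof.
  pose proof isom_ny as [I _].
  intros [[sL [HL HLm]] [[sR [HR HRm]] [[sB [HB HBm]] [sT [HT HTm]]]]].
  split; [|split; [|split]].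
  - exists (ny sL). rewrite I. split; auto. intros z Hz. pose proof (HLm _ Hz). unfold ny in *; simpl in *; lra.
  - exists (ny sR). rewrite I. split; auto. intros z Hz. pose proof (HRm _ Hz). unfold ny in *; simpl in *; lra.
  - exists (ny sT). rewrite I. split; auto. intros z Hz. pose proof (HTm _ Hz). unfold ny in *; simpl in *; lra.
  - exists (ny sB). rewrite I. split; auto. intros z Hz. pose proof (HBm _ Hz). unfold ny in *; simpl in *; lra.
Qed.

Lemma reduce_gen s w Sp p b : isom s ->
  (forall a c, s (fst c, snd a) = (fst (s c), snd (s a))) ->
  (forall a c, s (fst a, snd c) = (fst (s a), snd (s c))) ->
  (forall a c, snd a = snd c -> snd (s a) = snd (s c)) ->
  (forall a c, fst a = fst c -> fst (s a) = fst (s c)) ->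
  (sides4 w Sp -> sides4 (fun x => w (s x)) (fun x => Sp (s x))) ->
  PL (fun x => w (s x)) (fun x => Sp (s x)) (s p) (s b) -> PL w Sp p b.
Proof.
  intros Hs M1 M2 Cs Cf Sd H HH HV HS Hc Hsd Hp Hb [i1 [L1 I1]] [i2 [L2 I2]].
  pose proof Hs as [I _].
  destruct H as [z [Hz Hl]].
  - apply (Hgen_tr s snd snd w Hs); auto.
  - apply (Hgen_tr s fst fst w Hs); auto.
  - intros z Hz. auto.
  - apply conn_tr; auto.
  - auto.
  - intros N. apply Hp. rewrite <- (I p). apply (int_tr' s w); auto.
  - intros N. apply Hb. rewrite <- (I b). apply (int_tr' s w); auto.
  - exists (s i1). split; [apply L1s_tr; auto|]. apply int_tr; auto. rewrite I; auto.
  - exists (s i2). split; [apply L2s_tr; auto|]. apply int_tr; auto. rewrite I; auto.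
  - exists (s z). split; auto. rewrite <- (I p), <- (I b). apply L1s_tr; auto.
Qed.

Lemma coreL w Sp p b : PL w Sp p b.
Proof.
  assert (Hy : forall w Sp p b, fst p <= fst b -> PL w Sp p b).
  { intros w0 Sp0 p0 b0 Hx. destruct (Rle_dec (snd p0) (snd b0)) as [Hy|Hy].
    - apply coreN; auto.
    - apply (reduce_gen ny).
      + exact isom_ny.
      + intros; reflexivity.
      + intros; reflexivity.
      + intros a c Ha; unfold ny; simpl; rewrite Ha; reflexivity.
      + intros a c Ha; unfold ny; simpl; rewrite Ha; reflexivity.
      + apply sides_ny.
      + apply coreN; unfold ny; simpl; lra. }
  destruct (Rle_dec (fst p) (fst b)) as [Hx|Hx].
  - apply Hy; auto.
  - apply (reduce_gen nx).
    + exact isom_nx.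
    + intros; reflexivity.
    + intros; reflexivity.
    + intros a c Ha; unfold nx; simpl; rewrite Ha; reflexivity.
    + intros a c Ha; unfold nx; simpl; rewrite Ha; reflexivity.
    + apply sides_nx.
    + apply Hy; unfold nx; simpl; lra.
Qed.


Lemma argmin (f : pt -> R) (V : list pt) : V <> nil ->
  exists k, (k < length V)%nat /\ forall j, (j < length V)%nat -> f (nth k V (0,0)) <= f (nth j V (0,0)).
Proof.
  induction V as [|a V IH]; intros H; [congruence|].
  destruct V as [|b V'].
  - exists 0%nat. split; [simpl; lia|]. intros j Hj. simpl in Hj. assert (j = 0%nat) by lia. subst. lra.
  - destruct IH as [k [Hk Hm]]; [discriminate|].
    destruct (Rle_dec (f a) (f (nth k (b :: V') (0,0)))) as [Hl|Hl].
    + exists 0%nat. split; [simpl; lia|]. intros j Hj. destruct j as [|j]; [simpl; lra|].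
      change (nth (S j) (a :: b :: V') (0,0)) with (nth j (b :: V') (0,0)).
      simpl in Hj. pose proof (Hm j ltac:(simpl; lia)).
      change (nth 0 (a :: b :: V') (0,0)) with a. lra.
    + exists (S k). split; [simpl in *; lia|]. intros j Hj. destruct j as [|j].
      * change (nth (S k) (a :: b :: V') (0,0)) with (nth k (b :: V') (0,0)).
        change (nth 0 (a :: b :: V') (0,0)) with a. lra.
      * change (nth (S k) (a :: b :: V') (0,0)) with (nth k (b :: V') (0,0)).
        change (nth (S j) (a :: b :: V') (0,0)) with (nth j (b :: V') (0,0)).
        apply Hm. simpl in *; lia.
Qed.

Lemma vtx_small V j : (j < length V)%nat -> vtx V j = nth j V (0,0).
Proof. intros H. unfold vtx. rewrite Nat.mod_small; auto. Qed.

Lemma vtx_in V j : (0 < length V)%nat -> exists k, (k < length V)%nat /\ vtx V j = nth k V (0,0).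
Proof.
  intros H. exists (j mod length V). split; [apply Nat.mod_upper_bound; lia|reflexivity].
Qed.

Lemma abs_le_b x M : Rabs x <= M -> - M <= x <= M.
Proof. intros H. pose proof (Rle_abs x). pose proof (Rle_abs (- x)). rewrite Rabs_Ropp in H1. lra. Qed.

Definition lf (c1 c2 : R) (z : pt) := c1 * fst z + c2 * snd z.

Lemma lf_seg c1 c2 m a b z : seg a b z -> m <= lf c1 c2 a -> m <= lf c1 c2 b -> m <= lf c1 c2 z.
Proof.
  intros [t [Ht E]] Ha Hb. rewrite E. unfold lf in *. simpl.
  replace (c1 * (fst a + t * (fst b - fst a)) + c2 * (snd a + t * (snd b - snd a)))
    with ((1 - t) * (c1 * fst a + c2 * snd a) + t * (c1 * fst b + c2 * snd b)) by ring.
  nra.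
Qed.

Lemma curve_bound V c1 c2 k : (k < length V)%nat ->
  (forall j, (j < length V)%nat -> lf c1 c2 (nth k V (0,0)) <= lf c1 c2 (nth j V (0,0))) ->
  forall z, poly_curve V z -> lf c1 c2 (nth k V (0,0)) <= lf c1 c2 z.
Proof.
  intros Hk Hm z [i [Hi He]]. unfold edge in He.
  destruct (vtx_in V i ltac:(lia)) as [k1 [Hk1 E1]].
  destruct (vtx_in V (S i) ltac:(lia)) as [k2 [Hk2 E2]].
  rewrite E1, E2 in He. apply (lf_seg _ _ _ _ _ _ He); auto.
Qed.

Lemma inf_exists (A : R -> Prop) : (exists s, A s) -> (forall s, A s -> 0 <= s) ->
  exists s0, 0 <= s0 /\ (forall s, A s -> s0 <= s) /\ (forall e, 0 < e -> exists s, A s /\ s < s0 + e).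
Proof.
  intros [s1 H1] Hpos.
  destruct (completeness (fun x => A (- x))) as [m [Hub Hl]].
  - exists 0. intros x Hx. pose proof (Hpos _ Hx). lra.
  - exists (- s1). rewrite Ropp_involutive. auto.
  - exists (- m). split; [|split].
    + assert (m <= 0). { apply Hl. intros x Hx. pose proof (Hpos _ Hx). lra. } lra.
    + intros s Hs. assert (- s <= m). { apply Hub. rewrite Ropp_involutive. auto. } lra.
    + intros e He. apply NNPP. intros N. assert (m <= m - e); [|lra].
      apply Hl. intros x Hx. apply NNPP. intros N2. apply N. exists (- x). split; auto. lra.
Qed.

Lemma ray_bound (w : pset) c1 c2 m : c1 * c1 + c2 * c2 = 1 -> -1 <= c1 <= 1 -> -1 <= c2 <= 1 ->
  bounded w -> (forall z, boundary w z -> m <= lf c1 c2 z) -> forall z, w z -> m <= lf c1 c2 z.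
Proof.
  intros Hn H1 H2 [M HM] Hb z Hz. apply NNPP. intro N.
  set (zs := fun s => (fst z - s * c1, snd z - s * c2)).
  assert (Hf : forall s, lf c1 c2 (zs s) = lf c1 c2 z - s).
  { intros s. unfold lf, zs. simpl.
    transitivity (c1 * fst z + c2 * snd z - s * (c1 * c1 + c2 * c2)); [ring|rewrite Hn; ring]. }
  assert (Hd : forall s s', dist2 (zs s) (zs s') = (s - s') * (s - s')).
  { intros s s'. unfold dist2, zs. simpl.
    transitivity ((s - s') * (s - s') * (c1 * c1 + c2 * c2)); [ring|rewrite Hn; ring]. }
  assert (Hz0 : zs 0 = z) by (unfold zs; rewrite (pair_eq z) at 3; f_equal; ring).
  assert (Hlow : forall y, w y -> - (2 * M) <= lf c1 c2 y).
  { intros y Hy. destruct (HM y Hy) as [A B]. apply abs_le_b in A. apply abs_le_b in B.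
    unfold lf. nra. }
  destruct (inf_exists (fun s => 0 <= s /\ ~ w (zs s))) as [s0 [Hs0 [Hinf Happ]]].
  - exists (Rabs (lf c1 c2 z) + 2 * M + 1). split.
    + pose proof (Rabs_pos (lf c1 c2 z)). pose proof (HM z Hz) as [A _].
      pose proof (Rabs_pos (fst z)). lra.
    + intros Hw. pose proof (Hlow _ Hw). rewrite Hf in H.
      pose proof (Rle_abs (lf c1 c2 z)). lra.
  - intros s [Hs _]; auto.
  - assert (Bd : boundary w (zs s0)).
    { split.
      - intros r Hr. set (s' := Rmax 0 (s0 - r / 2)).
        assert (Hs'1 : 0 <= s') by apply Rmax_l.
        assert (Hs'2 : s0 - r / 2 <= s') by apply Rmax_r.
        assert (Hs'3 : s' <= s0) by (apply Rmax_lub; lra).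
        exists (zs s'). split.
        + destruct (Req_dec s' s0) as [E|E].
          * assert (H0s : s0 = 0).
            { unfold s' in E. destruct (Rle_dec 0 (s0 - r / 2)).
              - rewrite Rmax_right in E; lra.
              - rewrite Rmax_left in E; lra. }
            rewrite E, H0s, Hz0. auto.
          * apply NNPP. intros Nw. pose proof (Hinf s' (conj Hs'1 Nw)). lra.
        + rewrite Hd. nra.
      - intros [r [Hr Hi]]. destruct (Happ r Hr) as [s [[Hs Hns] Hlt]].
        pose proof (Hinf s (conj Hs Hns)). apply Hns. apply Hi. rewrite Hd. nra. }
    pose proof (Hb _ Bd). rewrite Hf in H. lra.
Qed.


Lemma nbr_idx n k : (3 <= n)%nat -> (k < n)%nat -> exists a c, (a < n)%nat /\ (c < n)%nat /\
  a <> k /\ c <> k /\ a <> c /\ (S a) mod n = k mod n /\ (S k) mod n = c mod n.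
Proof.
  intros Hn Hk. destruct k as [|k].
  - exists (n - 1)%nat, 1%nat. repeat split; try lia.
    replace (S (n - 1)) with n by lia. rewrite Nat.Div0.mod_same. rewrite Nat.Div0.mod_0_l. reflexivity.
  - destruct (Nat.lt_ge_cases (S (S k)) n) as [H|H].
    + exists k, (S (S k)). repeat split; try lia.
    + exists k, 0%nat. repeat split; try lia.
      replace (S (S k)) with n by lia. rewrite Nat.Div0.mod_same. rewrite Nat.Div0.mod_0_l. reflexivity.
Qed.

Lemma collinear_snd a b c : snd a = snd b -> snd b = snd c -> collinear a b c.
Proof. unfold collinear. intros H1 H2. rewrite <- H2, <- H1. ring. Qed.
Lemma collinear_fst a b c : fst a = fst b -> fst b = fst c -> collinear a b c.
Proof. unfold collinear. intros H1 H2. rewrite <- H2, <- H1. ring. Qed.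

Lemma adj_edge_v V k : simple_polygon V -> general_position V -> rectilinear V ->
  (k < length V)%nat -> exists i, (i < length V)%nat /\ forall z, edge V i z -> fst z = fst (vtx V k).
Proof.
  intros [Hn _] Hg Hr Hk. destruct (nbr_idx (length V) k Hn Hk) as (a & c & Ha & Hc & N1 & N2 & N3 & E1 & E2).
  assert (V1 : vtx V (S a) = vtx V k) by (unfold vtx; rewrite E1; reflexivity).
  assert (V2 : vtx V (S k) = vtx V c) by (unfold vtx; rewrite E2; reflexivity).
  destruct (Hr k Hk) as [Rk|Rk].
  - exists k. split; auto. intros z Hz. unfold edge in Hz. apply seg_fst in Hz; auto.
  - destruct (Hr a Ha) as [Ra|Ra].
    + exists a. split; auto. intros z Hz. unfold edge in Hz. apply seg_fst in Hz; auto.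
      rewrite Hz, Ra, V1. reflexivity.
    + exfalso. apply (Hg a k c Ha Hk Hc); auto. apply collinear_snd.
      * rewrite Ra, V1. reflexivity.
      * rewrite Rk, V2. reflexivity.
Qed.

Lemma adj_edge_h V k : simple_polygon V -> general_position V -> rectilinear V ->
  (k < length V)%nat -> exists i, (i < length V)%nat /\ forall z, edge V i z -> snd z = snd (vtx V k).
Proof.
  intros [Hn _] Hg Hr Hk. destruct (nbr_idx (length V) k Hn Hk) as (a & c & Ha & Hc & N1 & N2 & N3 & E1 & E2).
  assert (V1 : vtx V (S a) = vtx V k) by (unfold vtx; rewrite E1; reflexivity).
  assert (V2 : vtx V (S k) = vtx V c) by (unfold vtx; rewrite E2; reflexivity).
  destruct (Hr k Hk) as [Rk|Rk].
  - destruct (Hr a Ha) as [Ra|Ra].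
    + exfalso. apply (Hg a k c Ha Hk Hc); auto. apply collinear_fst.
      * rewrite Ra, V1. reflexivity.
      * rewrite Rk, V2. reflexivity.
    + exists a. split; auto. intros z Hz. unfold edge in Hz. apply seg_snd in Hz; auto.
      rewrite Hz, Ra, V1. reflexivity.
  - exists k. split; auto. intros z Hz. unfold edge in Hz. apply seg_snd in Hz; auto.
Qed.

Lemma ext_bound V w c1 c2 : obstacle V w -> c1 * c1 + c2 * c2 = 1 -> -1 <= c1 <= 1 -> -1 <= c2 <= 1 ->
  exists k, (k < length V)%nat /\ w (vtx V k) /\ forall z, w z -> lf c1 c2 (vtx V k) <= lf c1 c2 z.
Proof.
  intros [[Hn _] [_ [Hcl [Hbd [_ Hb]]]]] H1 H2 H3.
  destruct (argmin (lf c1 c2) V) as [k [Hk Hm]]; [intros E; rewrite E in Hn; simpl in Hn; lia|].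
  exists k. rewrite vtx_small by auto. split; auto. split.
  - apply Hcl. rewrite <- vtx_small by auto. apply (proj1 (proj2 (Hb _) (ex_intro _ k (conj Hk (seg_l _ _))))).
  - apply ray_bound; auto. intros z Hz. apply curve_bound; auto. apply Hb; auto.
Qed.

Lemma sides_obs V w (Sg : list (pt * pt)) : obstacle V w -> rectilinear V ->
  (forall i, extreme_edge V w i -> exists s, In s Sg /\ exists x, segset s x /\ edge V i x) ->
  sides4 w (union_segs Sg).
Proof.
  intros Ho Hr Hyp. pose proof Ho as [SP [GP [Hcl [Hbd [_ Hb]]]]].
  assert (Hcw : forall z, poly_curve V z -> w z).
  { intros z Hz. apply Hcl. apply (proj2 (Hb z) Hz). }
  destruct (ext_bound V w 1 0 Ho) as [kL [HkL [WL BL]]]; try lra.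
  destruct (ext_bound V w (-1) 0 Ho) as [kR [HkR [WR BR]]]; try lra.
  destruct (ext_bound V w 0 1 Ho) as [kB [HkB [WB BB]]]; try lra.
  destruct (ext_bound V w 0 (-1) Ho) as [kT [HkT [WT BT]]]; try lra.
  unfold lf in BL, BR, BB, BT.
  set (xl := fst (vtx V kL)). set (xr := fst (vtx V kR)).
  set (yb := snd (vtx V kB)). set (yt := snd (vtx V kT)).
  assert (Hin : forall p, w p -> in_rect xl xr yb yt p).
  { intros p Hp. pose proof (BL p Hp). pose proof (BR p Hp). pose proof (BB p Hp). pose proof (BT p Hp).
    unfold in_rect, xl, xr, yb, yt. lra. }
  assert (Hbb : is_bbox w xl xr yb yt).
  { split; auto. intros xl' xr' yb' yt' H p Hp.
    pose proof (H _ WL). pose proof (H _ WR). pose proof (H _ WB). pose proof (H _ WT).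
    unfold in_rect, xl, xr, yb, yt in *. lra. }
  assert (Side : forall i (c : pt -> R) v, (i < length V)%nat -> (forall z, edge V i z -> c z = v) ->
    (forall z, in_rect xl xr yb yt z -> c z = v -> rect_boundary xl xr yb yt z) ->
    exists x, union_segs Sg x /\ c x = v).
  { intros i c v Hi He Hrb.
    assert (Ex : extreme_edge V w i).
    { split; auto. exists xl, xr, yb, yt. split; auto. intros p Hp. apply Hrb; auto.
      apply Hin. apply Hcw. exists i. auto. }
    destruct (Hyp i Ex) as [s [Hs [x [Hx Hex]]]]. exists x. split; [exists s; auto|]. auto. }
  split; [|split; [|split]].
  - destruct (adj_edge_v V kL SP GP Hr HkL) as [i [Hi He]].
    destruct (Side i fst xl Hi He) as [x [Hx Ex]].
    + intros z Hz E. split; auto.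
    + exists x. split; auto. intros z Hz. pose proof (BL z Hz). unfold xl in Ex. lra.
  - destruct (adj_edge_v V kR SP GP Hr HkR) as [i [Hi He]].
    destruct (Side i fst xr Hi He) as [x [Hx Ex]].
    + intros z Hz E. split; auto.
    + exists x. split; auto. intros z Hz. pose proof (BR z Hz). unfold xr in Ex. lra.
  - destruct (adj_edge_h V kB SP GP Hr HkB) as [i [Hi He]].
    destruct (Side i snd yb Hi He) as [x [Hx Ex]].
    + intros z Hz E. split; auto.
    + exists x. split; auto. intros z Hz. pose proof (BB z Hz). unfold yb in Ex. lra.
  - destruct (adj_edge_h V kT SP GP Hr HkT) as [i [Hi He]].
    destruct (Side i snd yt Hi He) as [x [Hx Ex]].
    + intros z Hz E. split; auto.
    + exists x. split; auto. intros z Hz. pose proof (BT z Hz). unfold yt in Ex. lra.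
Qed.


Lemma sw1 p q z : L2s p q z -> L1s q p z.
Proof. unfold L1s, L2s. intros [H|H]; [right; apply seg_sym; auto|left; apply seg_sym; auto]. Qed.
Lemma sw2 p q z : L1s p q z -> L2s q p z.
Proof. unfold L1s, L2s. intros [H|H]; [right; apply seg_sym; auto|left; apply seg_sym; auto]. Qed.

Theorem lemma4 (V : list pt) (w : pset) (S : list (pt * pt)) :
  obstacle V w -> rectilinear V -> rect_convex w ->
  inside S w ->
  (forall i, extreme_edge V w i ->
     exists s, In s S /\ exists x, segset s x /\ edge V i x) ->
  connected (union_segs S) ->
  skeleton w S.
Proof.
  intros Ho Hr Hc Hin Hyp Hcon. split; auto.
  intros p q Hp Hq H l Hl Ha.
  pose proof (rc_HH w Hc) as HH. pose proof (rc_HV w Hc) as HV.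
  pose proof (sides_obs V w S Ho Hr Hyp) as Sd.
  assert (HS : forall z, union_segs S z -> w z).
  { intros z [s [Hs Hz]]. apply (Hin s z Hs Hz). }
  assert (Hne : p <> q).
  { intros E. subst q. destruct (H nil) as [x [Hx Ix]].
    - split; [simpl; auto|]. split; [reflexivity|]. intros l' _ Hl'.
      pose proof (plen_ge l' p). pose proof (l1_ge0 p (last l' p)). simpl. lra.
    - intros x y (u & v & u' & v' & H1 & _). simpl in H1. tauto.
    - simpl in Hx. subst x. auto. }
  assert (I1 : exists z, L1s p q z /\ interior w z).
  { destruct (shortest_two p q) as [A B]. destruct (H _ A B) as [x [Hx Ix]].
    exists x. split; auto. apply trace_two; auto. }
  assert (I2 : exists z, L2s p q z /\ interior w z).
  { destruct (shortest_two' p q) as [A B]. destruct (H _ A B) as [x [Hx Ix]].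
    exists x. split; auto. apply trace_two'; auto. }
  destruct (path_cover p q l Hl Ha Hne) as [C|C].
  - destruct (coreL w (union_segs S) p q HH HV HS Hcon Sd Hp Hq I1 I2) as [z [[s [Hs Hz]] Lz]].
    exists s. split; auto. exists z. split; auto.
  - destruct (coreL w (union_segs S) q p HH HV HS Hcon Sd Hq Hp) as [z [[s [Hs Hz]] Lz]].
    + destruct I2 as [x [Hx Ix]]. exists x. split; auto. apply sw1; auto.
    + destruct I1 as [x [Hx Ix]]. exists x. split; auto. apply sw2; auto.
    + exists s. split; auto. exists z. split; auto. apply C. apply sw2; auto.
Qed.
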